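(* Let $G=(V,E,w)$ be a connected weighted graph with nonnegative edge weights, and let $f_{MST}(G)$ denote the weight of a minimum spanning tree of $G$. For add/remove adjacency over edges (adding one edge $e\notin E$ with an arbitrary nonnegative weight), $$\mathrm{RS}_{f_{MST}}(G)=\max_{S\subset V:\ \exists u\in S,\,v\in V\setminus S,\ \{u,v\}\notin E} w_1(S),$$ where $w_1(S)$ is the minimum weight among edges of $E$ crossing the cut $(S,V\setminus S)$.
   Context: $\mathrm{RS}_{f_{MST}}(G)=\max|f_{MST}((V,E))-f_{MST}((V,E\cup\{e\}))|$, the maximum over $e\in\binom{V}{2}\setminus E$ and over admissible weights of $e$ (weights are nonnegative; in the paper's setting all weights lie in $[0,B]$). *)

(* Defs.v *)
From HB Require Import structures.
From mathcomp Require Import all_boot all_order all_algebra.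
From mathcomp Require Import reals.
Set Implicit Arguments. Unset Strict Implicit. Unset Printing Implicit Defensive.
Import Order.TTheory GRing.Theory Num.Theory.
Local Open Scope ring_scope.

Section Graphs.
Variables (R : realType) (V : finType).
Implicit Types (E T : {set {set V}}) (w : {set V} -> R) (S e : {set V}).

Definition adj E : rel V := fun x y => (x != y) && ([set x; y] \in E).

Definition gconnected E : bool := [forall x, [forall y, connect (adj E) x y]].

Definition spanning_tree E T : bool :=
  [&& T \subset E, gconnected T & #|T| == #|V|.-1].

Definition tweight w T : R := \sum_(e in T) w e.

(* weight of a minimum spanning tree; the default (total weight of E) is an
   upper bound for every spanning tree weight when weights are nonnegative,
   so this is the true minimum whenever a spanning tree exists *)
Definition f_MST E w : R :=
  \big[Num.min/tweight w E]_(T : {set {set V}} | spanning_tree E T) tweight w T.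

Definition add_edge E e := e |: E.
Definition add_weight w e (c : R) : {set V} -> R :=
  fun x => if x == e then c else w x.

Definition crossing S e : bool := #|e :&: S| == 1%N.

Definition w1 E w S : R :=
  \big[Num.min/tweight w E]_(e in E | crossing S e) w e.

Definition cut_has_nonedge E S : bool :=
  [exists u in S, [exists v in ~: S, [set u; v] \notin E]].

Definition RS_rhs E w : R :=
  \big[Num.max/0]_(S : {set V} | cut_has_nonedge E S) w1 E w S.

End Graphs.

(* Main.v *)
Require Import Defs.
From HB Require Import structures.
From mathcomp Require Import all_boot all_order all_algebra.
From mathcomp Require Import reals lra zify.
Import Order.TTheory GRing.Theory Num.Theory.
Set Implicit Arguments. Unset Strict Implicit.

Section G.
Variable V : finType.
Implicit Types (T U : {set {set V}}).

Lemma adj_sym T : symmetric (adj T).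
Proof. by move=> x y; rewrite /adj eq_sym setUC. Qed.

Lemma csym T : connect_sym (adj T).
Proof. exact/sym_connect_sym/adj_sym. Qed.

Lemma adj_sub T U : T \subset U -> subrel (adj T) (adj U).
Proof. by move=> /subsetP h x y; rewrite /adj => /andP[-> /h]. Qed.

Lemma connect_subT T U : T \subset U -> forall x y, connect (adj T) x y -> connect (adj U) x y.
Proof. move=> h x y; apply: connect_sub => a b /(adj_sub h) hab; exact: connect1. Qed.

Lemma gconnP T : reflect (forall x y, connect (adj T) x y) (gconnected T).
Proof.
apply: (iffP forallP) => [h x y|h x]; first by have /forallP := h x; apply.
by apply/forallP.
Qed.

Lemma gconn_root T r : (forall z, connect (adj T) r z) -> gconnected T.
Proof.
move=> h; apply/gconnP => x y; apply: (connect_trans _ (h y)).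
by rewrite csym.
Qed.

Lemma path_avoid T x z p : path (adj T) x p -> z \notin x :: p ->
  forall y, path (adj (T :\ [set z; y])) x p.
Proof.
elim: p x => //= a p IH x /andP[hxa hp]; rewrite in_cons negb_or => /andP[zx zp] y.
apply/andP; split; last exact: IH.
move: hxa; rewrite /adj => /andP[-> h]; rewrite in_setD1 h andbT.
apply/eqP => E; have : z \in [set x; a] by rewrite E set21.
move: zp; rewrite in_cons negb_or => /andP[za _].
by rewrite !inE (negbTE zx) (negbTE za).
Qed.

Lemma cross_path T (S : {set V}) x p : uniq (x :: p) -> path (adj T) x p ->
  x \in S -> last x p \notin S ->
  exists s t, [/\ s \in S, t \notin S, adj T s t, s \in x :: p & t \in x :: p] /\
   (connect (adj (T :\ [set s; t])) x s /\ connect (adj (T :\ [set s; t])) t (last x p)).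
Proof.
elim: p x => [|y p IH] x /=; first by move=> _ _ ->.
move=> /andP[xn un] /andP[hxy hp] xS lS.
case yS: (y \in S).
  have [s [t [[sS tS hst sin tin] [c1 c2]]]] := IH y un hp yS lS.
  exists s, t; split; first by split => //; rewrite in_cons ?sin ?tin orbT.
  split => //.
  apply: connect_trans c1; apply: connect1.
  move: hxy; rewrite /adj => /andP[-> h]; rewrite in_setD1 h andbT.
  apply/eqP => E; have : x \in [set s; t] by rewrite -E set21.
  rewrite !inE => /orP[] /eqP ex; subst x; by rewrite ?sin ?tin in xn.
exists x, y; split; first by split => //; rewrite ?yS ?in_cons ?eqxx ?orbT.
split => //.
apply/connectP; exists p => //; exact: path_avoid.
Qed.

Lemma cross_conn T (S : {set V}) x y : connect (adj T) x y -> x \in S -> y \notin S ->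
  exists s t, [/\ s \in S, t \notin S, adj T s t &
   connect (adj (T :\ [set s; t])) x s /\ connect (adj (T :\ [set s; t])) t y].
Proof.
move=> /connectP[p hp ->] xS yS.
move: yS; case: (shortenP hp) => p' hp' up' _ hl.
have [s [t [[? ? ? _ _] ?]]] := cross_path up' hp' xS hl.
by exists s, t.
Qed.


Section BFS.
Variables (T : {set {set V}}) (r : V).
Hypothesis Hc : forall z, connect (adj T) r z.

Definition reach n z := [exists p : n.-tuple V, path (adj T) r p && (last r p == z)].

Lemma reach_ex z : exists n, reach n z.
Proof.
have /connectP[p hp ->] := Hc z.
exists (size p); apply/existsP; exists (in_tuple p); by rewrite /= hp eqxx.
Qed.

Definition dd z := ex_minn (reach_ex z).

Lemma dd_spec z : reach (dd z) z.
Proof. by rewrite /dd; case: ex_minnP. Qed.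

Lemma dd_min z n : reach n z -> dd z <= n.
Proof. rewrite /dd; case: ex_minnP => m _ h; exact: h. Qed.

Lemma dd_par z : z != r -> exists y, adj T y z && (dd y < dd z).
Proof.
move=> zr; have := dd_spec z; case E: (dd z) => [|k].
  case/existsP => p; rewrite (tuple0 p) /= => /eqP rz.
  by rewrite rz eqxx in zr.
case/existsP => -[p sz] /= /andP[].
move: sz; case/lastP: p => [//|q y].
rewrite size_rcons rcons_path last_rcons eqSS => sz /andP[hq hy] /eqP yz; subst y.
exists (last r q); rewrite hy /=.
apply: (leq_ltn_trans (n := k)) => //.
apply: dd_min; apply/existsP; exists (Tuple sz); by rewrite /= hq eqxx.
Qed.

Definition par z := odflt r [pick y | adj T y z && (dd y < dd z)].

Lemma par_spec z : z != r -> adj T (par z) z && (dd (par z) < dd z).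
Proof.
move=> zr; rewrite /par; case: pickP => [y -> //|h].
by have [y hy] := dd_par zr; rewrite h in hy.
Qed.

Definition PT := [set [set par z; z] | z in [set~ r]].

Lemma PT_sub : PT \subset T.
Proof.
apply/subsetP => e /imsetP[z hz ->]; rewrite !inE in hz.
by have /andP[/andP[_ h] _] := par_spec hz.
Qed.

Lemma PT_card : #|PT| = #|V|.-1.
Proof.
rewrite card_in_imset ?cardsC1 // => z z' hz hz' eq; rewrite !inE in hz hz'.
apply/eqP; apply/negPn/negP => nz.
have h1 : z \in [set par z'; z'] by rewrite -eq !inE eqxx orbT.
have h2 : z' \in [set par z; z] by rewrite eq !inE eqxx orbT.
rewrite !inE (negbTE nz) orbF in h1; rewrite !inE [z' == z]eq_sym (negbTE nz) orbF in h2.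
have /andP[_ d1] := par_spec hz; have /andP[_ d2] := par_spec hz'.
rewrite -(eqP h2) in d1; rewrite -(eqP h1) in d2.
by have := ltn_trans d1 d2; rewrite ltnn.
Qed.

Lemma PT_conn z : connect (adj PT) r z.
Proof.
elim: {z}(dd z).+1 {-2}z (ltnSn (dd z)) => // n IH z hz.
case: (eqVneq z r) => [->|zr]; first exact: connect0.
have /andP[ha hd] := par_spec zr.
apply: (connect_trans (IH (par z) _)); first exact: leq_trans hd hz.
apply: connect1; rewrite /adj; move: ha => /andP[-> _] /=.
by apply: imset_f; rewrite !inE.
Qed.

End BFS.

Lemma tree_sub T (r : V) : gconnected T ->
  exists P : {set {set V}}, [/\ P \subset T, gconnected P & #|P| = #|V|.-1].
Proof.
move=> /gconnP h; exists (PT (h r)); split.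
- exact: PT_sub.
- exact: (gconn_root (PT_conn (h r))).
- exact: PT_card.
Qed.

Lemma conn_card T : gconnected T -> #|V|.-1 <= #|T|.
Proof.
move=> hT; case: (pickP (fun _ : V => true)) => [r _|h].
  have [P [sP _ cP]] := tree_sub r hT; rewrite -cP; exact: subset_leq_card.
have -> : #|V| = 0%N by apply: eq_card0 => x; have := h x.
by [].
Qed.

End G.

Local Open Scope ring_scope.

Section Real.
Variables (R : realType) (V : finType).
Implicit Types (E T U : {set {set V}}) (w : {set V} -> R) (S e : {set V}).

Lemma bigmin_le (I : eqType) (r : seq I) (P : pred I) (F : I -> R) x i :
  i \in r -> P i -> \big[Num.min/x]_(j <- r | P j) F j <= F i.
Proof.
elim: r => //= a r IH; rewrite in_cons big_cons => /orP[/eqP <-|ir] Pi.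
  by rewrite Pi ge_min lexx.
case: (P a); last exact: IH.
by rewrite ge_min IH ?orbT.
Qed.

Lemma le_bigmax (I : eqType) (r : seq I) (P : pred I) (F : I -> R) x i :
  i \in r -> P i -> F i <= \big[Num.max/x]_(j <- r | P j) F j.
Proof.
elim: r => //= a r IH; rewrite in_cons big_cons => /orP[/eqP <-|ir] Pi.
  by rewrite Pi le_max lexx.
case: (P a); last exact: IH.
by rewrite le_max IH ?orbT.
Qed.

Lemma fmst_le E w T : spanning_tree E T -> f_MST E w <= tweight w T.
Proof. by move=> h; apply: bigmin_le => //; rewrite mem_index_enum. Qed.

Lemma fmst_ge E w x : (forall T, spanning_tree E T -> x <= tweight w T) ->
  x <= tweight w E -> x <= f_MST E w.
Proof.
move=> h hE; apply: (big_ind (fun y => x <= y)) => //.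
by move=> a b ha hb; rewrite le_min ha hb.
Qed.

Lemma tw_sub w E T : (forall e, e \in E -> 0 <= w e) -> T \subset E ->
  tweight w T <= tweight w E.
Proof.
move=> hw sT; rewrite /tweight [X in _ <= X](big_setID T) /=; move/setIidPr: sT => ->; rewrite lerDl.
by apply: sumr_ge0 => i /setDP[/hw].
Qed.

Lemma w1_ge E w S y : (forall x, x \in E -> crossing S x -> y <= w x) ->
  y <= tweight w E -> y <= w1 E w S.
Proof.
move=> h hE; apply: (big_ind (fun z => y <= z)) => //.
  by move=> a b ha hb; rewrite le_min ha hb.
by move=> i /andP[]; apply: h.
Qed.

Lemma w1_ge0 E w S : (forall e, e \in E -> 0 <= w e) -> 0 <= w1 E w S.
Proof.
move=> hw; apply: w1_ge => [x xE _|]; first exact: hw.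
by apply: sumr_ge0.
Qed.

Lemma w1_le E w S a : a \in E -> crossing S a -> w1 E w S <= w a.
Proof. by move=> aE ac; apply: bigmin_le; rewrite ?mem_index_enum ?aE. Qed.

Lemma RS_ge0 E w : (forall e, e \in E -> 0 <= w e) -> 0 <= RS_rhs E w.
Proof.
move=> hw; apply: (big_ind (fun z => 0 <= z)) => //.
  by move=> a b ha hb; rewrite le_max ha.
by move=> i _; apply: w1_ge0.
Qed.

Lemma w1_le_RS E w S : cut_has_nonedge E S -> w1 E w S <= RS_rhs E w.
Proof. by move=> h; apply: le_bigmax; rewrite ?mem_index_enum. Qed.

Lemma cross_pair S s t : s \in S -> t \notin S -> crossing S [set s; t].
Proof.
move=> sS tS; rewrite /crossing.
have -> : [set s; t] :&: S = [set s].
  apply/setP => z; rewrite !inE; case: (eqVneq z s) => [->|zs]; first by rewrite sS.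
  by case: (eqVneq z t) => [->|] //=; rewrite (negbTE tS).
by rewrite cards1.
Qed.

Lemma cross2 S (a : {set V}) : #|a| = 2%N -> crossing S a ->
  exists p q, [/\ a = [set p; q], p \in S & q \notin S].
Proof.
move=> /eqP/cards2P[x [y [xy ->]]]; rewrite /crossing.
case xS: (x \in S); case yS: (y \in S).
- have -> : [set x; y] :&: S = [set x; y].
    by apply/setP => z; rewrite !inE; case: (eqVneq z x) => [->//|]; case: (eqVneq z y) => [->|].
  by rewrite cards2 xy.
- by exists x, y; rewrite xS yS.
- by exists y, x; rewrite xS yS setUC.
- have -> : [set x; y] :&: S = set0.
    by apply/setP => z; rewrite !inE; case: (eqVneq z x) => [->//|]; case: (eqVneq z y) => [->|].
  by rewrite cards0.
Qed.


Lemma tw_out w e c T : e \notin T -> tweight (add_weight w e c) T = tweight w T.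
Proof.
move=> eT; apply: eq_bigr => x xT; rewrite /add_weight ifN //.
by apply/eqP => xe; rewrite -xe xT in eT.
Qed.

Lemma fle E w u v c : (forall e, e \in E -> 0 <= w e) -> gconnected E ->
  [set u; v] \notin E ->
  f_MST (add_edge E [set u; v]) (add_weight w [set u; v] c) <= f_MST E w.
Proof.
move=> hw hc eE; set e := [set u; v].
have key : forall T, spanning_tree E T ->
    f_MST (add_edge E e) (add_weight w e c) <= tweight w T.
  move=> T /and3P[sT cT nT].
  have eT : e \notin T by apply: contra eE; apply: (subsetP sT).
  rewrite -(tw_out w c eT); apply: fmst_le; rewrite /spanning_tree cT nT !andbT.
  by rewrite /add_edge; apply/subsetP => x xT; rewrite !inE (subsetP sT x xT) orbT.
apply: fmst_ge => //.
have [T0 [s0 c0 n0]] := tree_sub u hc.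
apply: le_trans (key T0 _) (tw_sub hw s0).
by rewrite /spanning_tree s0 c0 n0 eqxx.
Qed.

Lemma Bp E w u v c S : (forall e, e \in E -> 0 <= w e) -> gconnected E ->
  u != v -> [set u; v] \notin E -> u \in S -> v \notin S ->
  f_MST (add_edge E [set u; v]) (add_weight w [set u; v] c) + w1 E w S
    <= f_MST E w + c.
Proof.
move=> hw hc uv eE uS vS; set e := [set u; v].
set f' := f_MST _ _.
have key : forall T, spanning_tree E T -> f' + w1 E w S <= tweight w T + c.
  move=> T /and3P[sT cT /eqP nT].
  have [s [t [sS tS hst [c1 c2]]]] := cross_conn (elimT (gconnP _) cT u v) uS vS.
  set a := [set s; t].
  have aT : a \in T by case/andP: hst.
  have eT : e \notin T by apply: contra eE; apply: (subsetP sT).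
  set T' := e |: (T :\ a).
  have sub1 : forall x y, connect (adj (T :\ a)) x y -> connect (adj T') x y.
    by apply: connect_subT; apply: subsetUr.
  have hst' : connect (adj T') s t.
    apply: (connect_trans (y := u)); first by rewrite csym; apply: sub1.
    apply: (connect_trans (y := v)); last by rewrite csym; apply: sub1.
    by apply: connect1; rewrite /adj uv setU11.
  have st' : spanning_tree (add_edge E e) T'.
    apply/and3P; split.
    - apply/subsetP => x; rewrite /T' /add_edge !inE => /orP[->//|/andP[_ xT]].
      by rewrite (subsetP sT x xT) orbT.
    - apply: (gconn_root (r := u)) => z; move: (elimT (gconnP _) cT u z).
      apply: connect_sub => x y hxy.
      case: (eqVneq [set x; y] a) => [exy|nxy].
        have hz : forall z, z \in a -> connect (adj T') s z.
          move=> z'; rewrite !inE => /orP[] /eqP ->; [exact: connect0|exact: hst'].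
        apply: (connect_trans (y := s)); last by apply: hz; rewrite -exy set22.
        by rewrite csym; apply: hz; rewrite -exy set21.
      apply: connect1; move: hxy; rewrite /adj => /andP[-> h].
      by rewrite /T' !inE nxy h orbT.
    - rewrite /T' cardsU1 in_setD1 (negbTE eT) andbF /= -nT (cardsD1 a T) aT.
      by [].
  have wT' : tweight (add_weight w e c) T' = tweight w T - w a + c.
    rewrite /tweight big_setU1 /=; last by rewrite in_setD1 (negbTE eT) andbF.
    rewrite {1}/add_weight eqxx.
    have -> : \sum_(i in T :\ a) add_weight w e c i = \sum_(i in T :\ a) w i.
      apply: tw_out; by rewrite in_setD1 (negbTE eT) andbF.
    rewrite (big_setD1 a aT) /=; lra.
  have ha : w1 E w S <= w a.
    apply: w1_le; first exact: (subsetP sT).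
    exact: cross_pair.
  have := fmst_le (add_weight w e c) st'; rewrite wT' /f'; lra.
have [T0 [s0 c0 n0]] := tree_sub u hc.
have st0 : spanning_tree E T0 by rewrite /spanning_tree s0 c0 n0 eqxx.
have k0 := key T0 st0.
have t0 := tw_sub hw s0.
have : f' + w1 E w S - c <= f_MST E w.
  apply: fmst_ge; last by lra.
  by move=> T hT; have := key T hT; lra.
lra.
Qed.


Lemma connect_adj_eq T x y z : adj T x y -> connect (adj T) z x = connect (adj T) z y.
Proof.
move=> h; apply/idP/idP => hz; apply: (connect_trans hz); apply: connect1 => //.
by rewrite adj_sym.
Qed.

Lemma Ap E w u v c : (forall e, e \in E -> #|e| = 2%N) ->
  (forall e, e \in E -> 0 <= w e) -> gconnected E ->
  u != v -> [set u; v] \notin E -> 0 <= c ->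
  f_MST E w - RS_rhs E w <= f_MST (add_edge E [set u; v]) (add_weight w [set u; v] c).
Proof.
move=> h2 hw hc uv eE c0; set e := [set u; v].
set f := f_MST E w; set RS := RS_rhs E w.
have RS0 : 0 <= RS by apply: RS_ge0.
have [T0 [s0 c0' n0]] := tree_sub u hc.
have st0 : spanning_tree E T0 by rewrite /spanning_tree s0 c0' n0 eqxx.
have fE : f <= tweight w E by apply: le_trans (fmst_le w st0) (tw_sub hw s0).
apply: fmst_ge; last first.
  rewrite /tweight /add_edge big_setU1 //= {1}/add_weight eqxx.
  have -> : \sum_(i in E) add_weight w e c i = \sum_(i in E) w i by apply: tw_out.
  rewrite -/(tweight w E); lra.
move=> T' /and3P[sT' cT' /eqP nT'].
case eT' : (e \in T'); last first.
  have sTE : T' \subset E.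
    apply/subsetP => x xT; have := subsetP sT' x xT; rewrite /add_edge !inE.
    case/orP => [/eqP xe|//]; by rewrite -xe xT in eT'.
  have st : spanning_tree E T' by rewrite /spanning_tree sTE cT' nT' eqxx.
  rewrite tw_out ?eT' //; have := fmst_le w st; rewrite -/f; lra.
set U := T' :\ e.
have UE : U \subset E.
  apply/subsetP => x; rewrite /U in_setD1 => /andP[xe xT].
  by have := subsetP sT' x xT; rewrite /add_edge !inE (negbTE xe).
have Kall : forall z, connect (adj U) u z || connect (adj U) v z.
  move=> z.
  have Hcl : closed (adj T') [pred z | connect (adj U) u z || connect (adj U) v z].
    move=> x y hxy; rewrite !inE /=.
    case: (eqVneq [set x; y] e) => [exy|nxy].
      have hK : forall z, z \in e -> connect (adj U) u z || connect (adj U) v z.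
        by move=> z'; rewrite !inE => /orP[] /eqP ->; rewrite connect0 ?orbT.
      by rewrite hK ?hK // -exy ?set21 ?set22.
    have hU : adj U x y by move: hxy; rewrite /adj /U in_setD1 nxy => /andP[-> ->].
    by rewrite !(connect_adj_eq _ hU).
  have := closed_connect Hcl (elimT (gconnP _) cT' u z).
  by rewrite !inE /= connect0 /= => <-.
set S := [set z | connect (adj U) u z].
have uS : u \in S by rewrite inE connect0.
have nU : #|T'| = (1 + #|U|)%N by rewrite (cardsD1 e T') eT'.
have vS : v \notin S.
  apply/negP; rewrite inE => huv.
  have cU : gconnected U.
    apply: (gconn_root (r := u)) => z; case/orP: (Kall z) => // hz.
    exact: connect_trans huv hz.
  have := conn_card cU.
  have := max_card (mem [set u; v]); rewrite cards2 uv.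
  have ar : forall n m k : nat, (2 <= n -> n.-1 <= m -> k = 1 + m -> k = n.-1 -> False)%N.
    by move=> n m k; case: n => // n; rewrite succnK => h1 h3 -> h4; move: h3; rewrite -h4 ltnn.
  by move=> h1 h3; apply: (ar _ _ _ h1 h3 nU nT').
have cutS : cut_has_nonedge E S.
  apply/existsP; exists u; rewrite uS /=; apply/existsP; exists v.
  by rewrite inE vS eE.
have [s [t [sS tS hst _]]] := cross_conn (elimT (gconnP _) hc u v) uS vS.
have P0 : ([set s; t] \in E) && crossing S [set s; t].
  by rewrite cross_pair // andbT; case/andP: hst.
case: (@arg_minP _ _ _ [set s; t] [pred x | (x \in E) && crossing S x] w P0) => a /andP[aE acr] amin.
have wa : w a <= w1 E w S.
  apply: w1_ge => [x xE xc|]; first by apply: amin; apply/andP.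
  have -> : w a = tweight w [set a] by rewrite /tweight big_set1.
  by apply: tw_sub => //; rewrite sub1set.
have wRS : w1 E w S <= RS by apply: w1_le_RS.
have [p [q [ae pS qS]]] := cross2 (h2 a aE) acr.
have pq : p != q by apply/eqP => epq; rewrite -epq pS in qS.
have aU : a \notin U.
  apply/negP => aU; have hpq : adj U p q by rewrite /adj pq -ae.
  move: pS qS; rewrite !inE => hp; rewrite (connect_trans hp (connect1 hpq)).
  by [].
set T'' := a |: U.
have st'' : spanning_tree E T''.
  apply/and3P; split.
  - by rewrite /T' subUset sub1set aE UE.
  - apply: (gconn_root (r := u)) => z.
    have sub1 : forall x y, connect (adj U) x y -> connect (adj T'') x y.
      by apply: connect_subT; apply: subsetUr.
    have huv : connect (adj T'') u v.
      have hp : connect (adj T'') u p by apply: sub1; rewrite inE in pS.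
      apply: (connect_trans hp); apply: (connect_trans (y := q)).
        by apply: connect1; rewrite /adj pq -ae setU11.
      case/orP: (Kall q) => hq; first by rewrite inE hq in qS.
      by rewrite csym; apply: sub1.
    case/orP: (Kall z) => hz; first exact: sub1.
    exact: connect_trans huv (sub1 _ _ hz).
  - by rewrite /T'' cardsU1 aU -nT' nU.
have wT' : tweight (add_weight w e c) T' = c + tweight w U.
  rewrite /tweight (big_setD1 e eT') /= {1}/add_weight eqxx.
  congr (_ + _); apply: tw_out; by rewrite /U in_setD1 eqxx.
have wT'' : tweight w T'' = w a + tweight w U.
  by rewrite /tweight big_setU1.
have := fmst_le w st''; rewrite -/f wT' => hf; lra.
Qed.

End Real.

Unset Implicit Arguments.

Theorem mainTheorem7 (R : realType) (V : finType)
    (E : {set {set V}}) (w : {set V} -> R) :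
  (forall e, e \in E -> #|e| = 2%N) ->
  (forall e, e \in E -> 0 <= w e) ->
  gconnected E ->
  (exists u v : V, u != v /\ [set u; v] \notin E) ->
  (* RS_{f_MST}(G) = RS_rhs E w, i.e. RS_rhs E w is the maximum of
     |f_MST(V,E) - f_MST(V, E u {e})| over non-edges e and weights c >= 0 *)
  (forall (u v : V) (c : R), u != v -> [set u; v] \notin E -> 0 <= c ->
     `|f_MST E w - f_MST (add_edge E [set u; v]) (add_weight w [set u; v] c)|
       <= RS_rhs E w) /\
  (exists (u v : V) (c : R), [/\ u != v, [set u; v] \notin E, 0 <= c &
     `|f_MST E w - f_MST (add_edge E [set u; v]) (add_weight w [set u; v] c)|
       = RS_rhs E w]).
Proof.
move=> h2 hw hc [u0 [v0 [uv0 e0]]]; split.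
  move=> u v c uv eE c0.
  have A := Ap h2 hw hc uv eE c0.
  have F := fle c hw hc eE.
  rewrite ger0_norm; lra.
set S0 := [set u0].
have P0 : cut_has_nonedge E S0.
  apply/existsP; exists u0; rewrite inE eqxx /=; apply/existsP; exists v0.
  by rewrite !inE eq_sym uv0 e0.
case: (@arg_maxP _ _ _ S0 [pred S | cut_has_nonedge E S] (w1 E w) P0) => S /= hS smax.
have RSle : RS_rhs E w <= w1 E w S.
  apply: (big_ind (fun z => z <= w1 E w S)).
  - exact: w1_ge0.
  - by move=> a b ha hb; rewrite ge_max ha hb.
  - by move=> i hi; apply: smax.
case/existsP: hS => u /andP[uS /existsP[v /andP[vS eE]]]; rewrite inE in vS.
have uv : u != v by apply/eqP => euv; rewrite -euv uS in vS.
exists u, v, 0; split => //.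
have A := Ap h2 hw hc uv eE (lexx 0).
have B := Bp 0 hw hc uv eE uS vS.
have W0 := w1_ge0 S hw.
rewrite ger0_norm; last by lra.
by apply/eqP; rewrite eq_le; apply/andP; split; lra.
Qed.
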